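(* Let $\mathcal V$ be a finite state space and consider a source continuous-time discrete diffusion (continuous-time Markov chain) whose learned reverse process has reverse-rate matrix $\widetilde R_t^\theta(\mathbf y', \mathbf y)$, so that for $s = t - \Delta t$ the source backward kernel satisfies $p_{s\mid t}(\mathbf y' \mid \mathbf y) = \delta_{\mathbf y', \mathbf y} + \widetilde R_t^\theta(\mathbf y', \mathbf y)\,\Delta t + \mathcal O(\Delta t^2)$. Let $r_\phi : \mathcal V \to (0,\infty)$ be the density-ratio guidance term (approximating $\mathbb E_{\mathbf x \sim p(\cdot \mid \mathbf y)}[q(\mathbf x)/p(\mathbf x)]$, where $p$ and $q$ are the source and target data distributions sharing the same forward process), and let the target backward kernel be $$q^{\psi}_{s\mid t}(\mathbf y' \mid \mathbf y) = \frac{p_{s\mid t}(\mathbf y' \mid \mathbf y)\, r_\phi(\mathbf y')}{\sum_{\tilde{\mathbf y} \in \mathcal V} p_{s\mid t}(\tilde{\mathbf y} \mid \mathbf y)\, r_\phi(\tilde{\mathbf y})}.$$ Then $q^{\psi}_{s\mid t}(\mathbf y' \mid \mathbf y) = \delta_{\mathbf y', \mathbf y} + \widetilde R_t^\psi(\mathbf y', \mathbf y)\,\Delta t + \mathcal O(\Delta t^2)$, i.e. sampling from the target distribution is governed by the target reverse-rate matrix $$\widetilde R_t^{\psi}(\mathbf y', \mathbf y) = \begin{cases} \dfrac{r_\phi(\mathbf y')}{r_\phi(\mathbf y)}\,\widetilde R_t^\theta(\mathbf y', \mathbf y), & \mathbf y' \neq \mathbf y,\\[8pt] -\displaystyle\sum_{\tilde{\mathbf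 y} \neq \mathbf y} \dfrac{r_\phi(\tilde{\mathbf y})}{r_\phi(\mathbf y)}\,\widetilde R_t^\theta(\tilde{\mathbf y}, \mathbf y), & \mathbf y' = \mathbf y.\end{cases}$$
   Context: In the continuous-time framework, $t \in [0,T]$ is continuous, $p_{s\mid t}(\mathbf y' \mid \mathbf y) := p(\mathbf z_s = \mathbf y' \mid \mathbf z_t = \mathbf y)$ is the backward kernel, $\delta_{\mathbf y', \mathbf y}$ is the Kronecker delta, and $\mathcal O(\Delta t^2)$ denotes terms of order $\Delta t^2$ or higher as $\Delta t \to 0$. A reverse-rate matrix has nonnegative off-diagonal entries and columns summing to zero. The form of $q^{\psi}_{s\mid t}$ is the optimal target reverse kernel from ratio-based transfer: the reweighting of the source backward kernel by the ratio $r_\phi$ of the next state. *)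

(* Defs.v *)
From mathcomp Require Import all_boot all_order all_algebra.
Set Implicit Arguments. Unset Strict Implicit. Unset Printing Implicit Defensive.
Import Order.TTheory GRing.Theory Num.Theory.
Local Open Scope ring_scope.

Definition kdelta {V : finType} {R : numDomainType} (y' y : V) : R :=
  if y' == y then 1 else 0.

(* f(dt) = O(dt^2) as dt -> 0+ (dt > 0 is the step size, s = t - dt). *)
Definition bigO_sq {R : realFieldType} (f : R -> R) : Prop :=
  exists C : R, exists eta : R, 0 < eta /\
    forall h : R, 0 < h -> h < eta -> `|f h| <= C * h ^+ 2.

(* Reverse-rate matrix Rm (Rm y' y = rate from y to y'): nonnegative
   off-diagonal entries, columns (fixed y) summing to zero. *)
Definition is_rate_matrix {V : finType} {R : realFieldType} (Rm : V -> V -> R) : Prop :=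
  (forall y' y, y' != y -> 0 <= Rm y' y) /\
  (forall y, \sum_(y' : V) Rm y' y = 0).

(* Target backward kernel obtained by ratio reweighting; p dt y' y = p_{s|t}(y'|y). *)
Definition qpsi {V : finType} {R : realFieldType}
  (p : R -> V -> V -> R) (r : V -> R) (dt : R) (y' y : V) : R :=
  p dt y' y * r y' / \sum_(yt : V) p dt yt y * r yt.

Definition Rpsi {V : finType} {R : realFieldType}
  (Rth : V -> V -> R) (r : V -> R) (y' y : V) : R :=
  if y' != y then r y' / r y * Rth y' y
  else - \sum_(yt : V | yt != y) r yt / r y * Rth yt y.

(* Main.v *)
Require Import Defs.
From mathcomp Require Import all_boot all_order all_algebra.
From mathcomp Require Import ring lra.
Import Order.TTheory GRing.Theory Num.Theory.
Local Open Scope ring_scope.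

Section Aux.
Context {R : realFieldType}.

Lemma bO_add {f g : R -> R} : bigO_sq f -> bigO_sq g -> bigO_sq (fun h => f h + g h).
Proof.
move=> [C1 [e1 [e10 H1]]] [C2 [e2 [e20 H2]]].
exists (C1 + C2), (Order.min e1 e2); split; first by rewrite lt_min e10 e20.
move=> h h0; rewrite lt_min => /andP[he1 he2].
apply: le_trans (ler_normD _ _) _; rewrite mulrDl.
by apply: lerD; [exact: H1|exact: H2].
Qed.

Lemma bO_0 : bigO_sq (fun _ : R => 0).
Proof. exists 0, 1; split => // h _ _; by rewrite normr0 mul0r. Qed.

Lemma bO_ext {f g : R -> R} :
  (exists e, 0 < e /\ forall h, 0 < h -> h < e -> f h = g h) ->
  bigO_sq g -> bigO_sq f.
Proof.
move=> [e [e0 He]] [C [e1 [e10 H1]]].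
exists C, (Order.min e e1); split; first by rewrite lt_min e0 e10.
move=> h h0; rewrite lt_min => /andP[he he1].
by rewrite He //; apply: H1.
Qed.

Lemma bO_bnd {f g : R -> R} : bigO_sq f ->
  (exists M e, 0 < e /\ forall h, 0 < h -> h < e -> `|g h| <= M) ->
  bigO_sq (fun h => g h * f h).
Proof.
move=> [C [e1 [e10 H1]]] [M [e [e0 He]]].
exists (M * C), (Order.min e e1); split; first by rewrite lt_min e0 e10.
move=> h h0; rewrite lt_min => /andP[he he1].
rewrite normrM -mulrA; apply: ler_pM => //; first exact: He.
exact: H1.
Qed.

Lemma bO_scale {f : R -> R} c : bigO_sq f -> bigO_sq (fun h => c * f h).
Proof.
move=> Hf; apply: bO_bnd Hf _; exists `|c|, 1; split => //.
Qed.

Lemma bO_h {f : R -> R} : bigO_sq f -> bigO_sq (fun h => h * f h).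
Proof.
move=> Hf; apply: bO_bnd Hf _; exists 1, 1; split => // h h0 h1.
by rewrite (ger0_norm (ltW h0)) ltW.
Qed.

Lemma bO_h2 c : bigO_sq (fun h : R => c * (h * h)).
Proof.
exists `|c|, 1; split => // h h0 _.
by rewrite normrM expr2 normrM (ger0_norm (ltW h0)).
Qed.

Lemma bO_sum (I : Type) (s : seq I) (F : I -> R -> R) :
  (forall z, bigO_sq (F z)) -> bigO_sq (fun h => \sum_(z <- s) F z h).
Proof.
move=> HF; elim: s => [|a s IH].
  by apply: bO_ext bO_0; exists 1; split => // h _ _; rewrite big_nil.
apply: bO_ext (bO_add (HF a) IH); exists 1; split => // h _ _.
by rewrite big_cons.
Qed.

End Aux.

Theorem theorem3 (R : realFieldType) (V : finType)
  (Rth : V -> V -> R) (p : R -> V -> V -> R) (r : V -> R) :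
  is_rate_matrix Rth ->
  (* p dt . y is a probability distribution on V for every step dt > 0 *)
  (forall dt y y', 0 < dt -> 0 <= p dt y' y) ->
  (forall dt y, 0 < dt -> \sum_(y' : V) p dt y' y = 1) ->
  (* p_{s|t}(y'|y) = delta + Rth(y',y) dt + O(dt^2) *)
  (forall y' y, bigO_sq (fun dt => p dt y' y - kdelta y' y - Rth y' y * dt)) ->
  (forall y, 0 < r y) ->
  forall y' y,
    bigO_sq (fun dt => qpsi p r dt y' y - kdelta y' y - Rpsi Rth r y' y * dt).
Proof.
move=> _ _ _ Hp Hr y' y.
pose e z h := p h z y - kdelta z y - Rth z y * h.
have He : forall z, bigO_sq (e z) by move=> z; exact: Hp.
pose S := \sum_(z : V) Rth z y * r z.
pose E h := \sum_(z : V) e z h * r z.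
have HE : bigO_sq E.
  apply: bO_sum => z; apply: (bO_ext _ (bO_scale (r z) (He z))).
  by exists 1; split => // h _ _; rewrite mulrC.
have Hk : \sum_(z : V) kdelta z y * r z = r y.
  rewrite (bigD1 y) //= /kdelta eqxx mul1r big1 ?addr0 // => z /negbTE ->.
  by rewrite mul0r.
have HD : forall h, \sum_(z : V) p h z y * r z = r y + h * S + E h.
  move=> h; rewrite /E /e.
  under [X in _ = _ + X]eq_bigr => z _ do rewrite !mulrBl.
  rewrite !sumrB Hk /S mulr_sumr.
  have -> : \sum_(z : V) Rth z y * h * r z = \sum_(z : V) h * (Rth z y * r z).
    by apply: eq_bigr => z _; ring.
  ring.
have ry0 := Hr y.
pose B := Rth y' y * r y' - kdelta y' y * S.
have HRpsi : Rpsi Rth r y' y = B / r y.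
  rewrite /Rpsi /B /kdelta; case: eqVneq => [->|ne] /=.
    rewrite /S [in RHS](bigD1 y) //=.
    have -> : \sum_(i | i != y) r i / r y * Rth i y = (\sum_(i | i != y) Rth i y * r i) / r y.
      by rewrite mulr_suml; apply: eq_bigr => i _; field; rewrite gt_eqF.
    field; rewrite gt_eqF //.
  by rewrite mul0r subr0; field; rewrite gt_eqF.
case: (HE) => K [eK [eK0 HK]].
pose M := `|S| + `|K| + 1.
have M0 : 0 < M by rewrite /M; have := normr_ge0 S; have := normr_ge0 K; lra.
pose eta0 := Order.min (Order.min eK 1) (r y / (2 * M)).
have eta00 : 0 < eta0.
  by rewrite /eta0 !lt_min eK0 ltr01 divr_gt0 // mulr_gt0.
have Dlow : forall h, 0 < h -> h < eta0 -> r y / 2 <= r y + h * S + E h.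
  move=> h h0; rewrite !lt_min => /andP[/andP[heK h1] hM].
  have := HK h h0 heK; rewrite ler_norml => /andP[HE1 _].
  move: hM; rewrite ltr_pdivlMr ?mulr_gt0 // => hM.
  have : `|S| <= `|S| by [].
  rewrite ler_norml => /andP[HS1 _].
  have HK1 : K <= `|K| by rewrite ler_norm.
  have HS0 := normr_ge0 S.
  have HK0 := normr_ge0 K.
  rewrite /M in hM.
  have a1 : h * (- `|S|) <= h * S by rewrite ler_pM2l.
  have a2 : K * h ^+ 2 <= `|K| * h.
    rewrite expr2; apply: (@le_trans _ _ (`|K| * (h * h))).
      by rewrite ler_pM2r ?mulr_gt0.
    apply: ler_wpM2l => //; nra.
  nra.
have Hbnd : exists M0 e0 : R, 0 < e0 /\ forall h, 0 < h -> h < e0 ->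
    `|(fun h => ((r y + h * S + E h) * r y)^-1) h| <= M0.
  exists (r y * r y / 2)^-1, eta0; split => // h h0 h1 /=.
  have D0 := Dlow h h0 h1.
  have P0 : 0 < (r y + h * S + E h) * r y by apply: mulr_gt0 => //; lra.
  rewrite ger0_norm; last by rewrite invr_ge0 ltW.
  rewrite lef_pV2 ?posrE ?P0 ?divr_gt0 ?mulr_gt0 //.
  have : r y / 2 * r y <= (r y + h * S + E h) * r y by rewrite ler_pM2r.
  lra.
pose c1 := r y' * r y.
pose c2 := - (kdelta y' y * r y).
pose c3 := - (B * S).
pose c4 := - B.
pose G := fun h => ((c1 * e y' h + c2 * E h) + c3 * (h * h)) + c4 * (h * E h).
have HG : bigO_sq G := bO_add (bO_add (bO_add (bO_scale c1 (He y')) (bO_scale c2 HE)) (bO_h2 c3)) (bO_scale c4 (bO_h HE)).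
apply: (bO_ext _ (bO_bnd (g := fun h => ((r y + h * S + E h) * r y)^-1) HG Hbnd)).
exists eta0; split => // h h0 h1.
have D0 := Dlow h h0 h1.
have Dn : r y + h * S + E h != 0 by rewrite gt_eqF //; lra.
have rn : r y != 0 by rewrite gt_eqF.
rewrite /qpsi HD HRpsi /G /c1 /c2 /c3 /c4 /B /e.
rewrite /kdelta; case: eqVneq => [eq|ne].
  subst y'; field; apply/andP; split => //.
field; apply/andP; split => //.
Qed.
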